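(* Consider $n$ parallel roads (indexed by $i\in[n]$) shared by $m$ vehicle types (indexed by $j\in[m]$), vehicle type $j$ having demand $\bar f^j\ge0$. A feasible routing is $f=(f^j_i)$ with $f^j_i\ge0$ and $\sum_i f^j_i=\bar f^j$ for each $j$. Road $i$ has latency $\ell_i(f)=b_i+\sum_j a^j_i f^j_i$, where $b_i\ge 0$ and the latency of every road is strictly increasing in the flow of each vehicle type on it (i.e. $a^j_i>0$ for all $i,j$). The social cost is $J(f)=\sum_i\big(\sum_j f^j_i\big)\ell_i(f)$. Given tolls $\tau=(\tau^j_i)$, the cost experienced by type $j$ on road $i$ is $c^j_i(f)=\ell_i(f)+\tau^j_i$, and a feasible routing $f$ is an equilibrium if for every $j$ and every road $i$ with $f^j_i>0$ one has $c^j_i(f)\le c^j_{i'}(f)$ for all $i'\in[n]$. For a routing $f$, let $\mathcal N^f_j=\{i: f^j_i>0\}$, and let $G(f)$ be the bipartite graph on the roads and the vehicle types with an edge between road $i$ and type $j$ iff $f^j_i>0$. Let $f^*$ be a feasible routing minimizing $J$ such that $G(f^* )$ is acyclic. Let $\mu$ be a constant, and levy the tolls $$\tau^j_i(f^* )=\begin{cases}\mu-\ell_i(f^* ) & \text{if } i\in\mathcal N^{f^*}_j,\\ P & \text{otherwise.}\end{cases}$$ Then, for sufficiently large $P$, the only equilibrium under these tolls is $f^*$.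
   Context: Parallel-road network with multiple vehicle types, affine road latencies with type-dependent coefficients, social cost equal to total latency; tolls may be vehicle-type- and road-specific. The existence of a socially optimal routing $f^*$ with acyclic $G(f^* )$ is guaranteed for this model. *)

(* Defs.v *)
From HB Require Import structures.
From mathcomp Require Import all_boot all_order all_algebra.
From mathcomp Require Import reals.
Set Implicit Arguments. Unset Strict Implicit. Unset Printing Implicit Defensive.
Import Order.TTheory GRing.Theory Num.Theory.
Local Open Scope ring_scope.

Section Routing.
Variables (R : realType) (n m : nat).
(* roads are 'I_n, vehicle types are 'I_m; a routing f i j = f^j_i *)
Definition routing := 'I_n -> 'I_m -> R.

Definition feasible (d : 'I_m -> R) (f : routing) : Prop :=
  (forall i j, 0 <= f i j) /\ (forall j, \sum_(i < n) f i j = d j).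

Definition latency (a : 'I_n -> 'I_m -> R) (b : 'I_n -> R) (f : routing) (i : 'I_n) : R :=
  b i + \sum_(j < m) a i j * f i j.

Definition social_cost a b (f : routing) : R :=
  \sum_(i < n) (\sum_(j < m) f i j) * latency a b f i.

Definition cost a b (tau : 'I_n -> 'I_m -> R) (f : routing) (i : 'I_n) (j : 'I_m) : R :=
  latency a b f i + tau i j.

Definition equilibrium a b d tau (f : routing) : Prop :=
  feasible d f /\
  forall (j : 'I_m) (i : 'I_n), 0 < f i j ->
    forall i' : 'I_n, cost a b tau f i j <= cost a b tau f i' j.

Definition support_graph (f : routing) : rel ('I_n + 'I_m)%type :=
  fun u v => match u, v with
             | inl i, inr j => 0 < f i j
             | inr j, inl i => 0 < f i j
             | _, _ => false
             end.

Definition acyclic_graph (T : eqType) (e : rel T) : Prop :=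
  forall c : seq T, (2 < size c)%N -> ~ ucycle e c.

Definition opt_tolls a b (fstar : routing) (mu P : R) : 'I_n -> 'I_m -> R :=
  fun i j => if 0 < fstar i j then mu - latency a b fstar i else P.
End Routing.

(* Main.v *)
From HB Require Import structures.
From mathcomp Require Import all_boot all_order all_algebra.
Set Implicit Arguments. Unset Strict Implicit. Unset Printing Implicit Defensive.
From mathcomp Require Import reals lra.
Require Import Defs.
Import Order.TTheory GRing.Theory Num.Theory.

Lemma path_iota (T : eqType) (e : rel T) (v : nat -> T) :
  (forall i, e (v i) (v i.+1)) ->
  forall k p, path e (v p) (map v (iota p.+1 k)).
Proof.
move=> he; elim=> [|k IH] p //=.
by rewrite he IH.
Qed.

Lemma walk_cycle (T : finType) (e : rel T) (S : rel T) :
  (forall x, ~~ e x x) ->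
  (forall u v, S u v -> e u v) ->
  (forall u v, S u v -> exists w, (w != u) && S v w) ->
  forall u0 v0, S u0 v0 -> exists c : seq T, (2 < size c)%N /\ ucycle e c.
Proof.
move=> irr Se Snext u0 v0 S0.
pose nxt (p : T * T) : T * T :=
  (p.2, odflt p.2 [pick w | (w != p.1) && S p.2 w]).
pose st k := iter k nxt (u0, v0).
have Hn : forall p, S p.1 p.2 -> S (nxt p).1 (nxt p).2 /\
   ((nxt p).2 != p.1) && ((nxt p).1 == p.2).
  move=> [u v] /= Suv; rewrite /nxt /=.
  case: pickP => [w0 /andP[H1 H2]|H].
    by rewrite H1 H2 eqxx.
  by exfalso; have [w Hw] := Snext _ _ Suv; rewrite H in Hw.
have Sst : forall k, S (st k).1 (st k).2 /\
   ((st k.+1).2 != (st k).1) && ((st k.+1).1 == (st k).2).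
  elim=> [|k [IH _]].
    by split => //; case: (Hn (u0, v0) S0).
  by split; [case: (Hn _ IH) | case: (Hn _ (proj1 (Hn _ IH)))].
pose v k := (st k).1.
have vnext : forall k, (st k).2 = v k.+1.
  by move=> k; have [_ /andP[_ /eqP <-]] := Sst k.
have he : forall k, e (v k) (v k.+1).
  by move=> k; rewrite -vnext; apply: Se; case: (Sst k).
have hnb : forall k, v k.+2 != v k.
  by move=> k; rewrite -vnext; case: (Sst k) => _ /andP[].
pose P q := [exists p : 'I_q, v p == v q].
have exP : exists q, P q.
  pose s := map v (iota 0 #|T|.+1).
  have : ~~ uniq s.
    apply/negP => /card_uniqP Hs.
    have := max_card (mem s).
    by rewrite Hs size_map size_iota ltnn.
  case/(uniqPn (v 0)) => i [j [ij js Hij]].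
  rewrite size_map size_iota in js.
  exists j; apply/existsP; exists (Ordinal ij) => /=.
  move: Hij; rewrite /s !(nth_map 0) ?size_iota //; last by apply: ltn_trans js.
  by rewrite !nth_iota //; [move=> -> | apply: ltn_trans js].
case: (ex_minnP exP) => q /existsP[p /eqP vpq] qmin.
have pq : (p < q)%N := ltn_ord p.
set k := (q - p.+1)%N.
have qE : q = (p.+1 + k)%N by rewrite /k subnKC.
exists (map v (iota p k.+1)); split.
  rewrite size_map size_iota.
  case: k qE => [|[|k]] qE //.
    by have := he p; rewrite -[p.+1]addn0 -[(p.+1 + 0)%N]qE -vpq (negbTE (irr _)).
  by have := hnb p; rewrite -(addn1 p.+1) -[(p.+1 + 1)%N]qE vpq eqxx.
rewrite /ucycle; apply/andP; split.
  rewrite /= -cats1.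
  have -> : [:: v p] = map v (iota (p.+1 + k) 1) by rewrite /= -qE vpq.
  by rewrite -map_cat -iotaD addn1 path_iota.
rewrite map_inj_in_uniq ?iota_uniq //.
move=> i j; rewrite !mem_iota => /andP[pi iq] /andP[pj jq] vij.
rewrite -addSnnS -qE in iq jq.
have key : forall i' j', (i' < j')%N -> (j' < q)%N -> v i' = v j' -> False.
  move=> i' j' ij jq' vij'; have : P j' by apply/existsP; exists (Ordinal ij); apply/eqP.
  by move/qmin; rewrite leqNgt jq'.
case: (ltngtP i j) => // h; exfalso; [exact: key h jq vij | exact: key h iq (esym vij)].
Qed.

Local Open Scope ring_scope.

Lemma exists_pos (R : realDomainType) (m : nat) (h : 'I_m -> R) j :
  h j < 0 -> 0 <= \sum_(k < m) h k -> exists k, 0 < h k.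
Proof.
move=> hj hs; case: (pickP (fun k => 0 < h k)) => [k hk | H]; first by exists k.
exfalso; move: hs; rewrite (bigD1 j) //=.
have : \sum_(k < m | k != j) h k <= 0 by apply: sumr_le0 => k _; rewrite leNgt H.
move=> H2 H3.
lra.
Qed.

Lemma exists_neg (R : realDomainType) (m : nat) (h : 'I_m -> R) j :
  0 < h j -> \sum_(k < m) h k <= 0 -> exists k, h k < 0.
Proof.
move=> hj hs.
have h1 : - h j < 0 by rewrite oppr_lt0.
have h2 : 0 <= \sum_(k < m) - h k.
  have E : \sum_(k < m) - h k = - \sum_(k < m) h k by exact: sumrN.
  by rewrite E oppr_ge0.
have [k hk] := exists_pos h1 h2.
by exists k; rewrite -oppr_gt0.
Qed.

Lemma exists_pos' (R : realDomainType) (m : nat) (h : 'I_m -> R) :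
  0 < \sum_(k < m) h k -> exists k, 0 < h k.
Proof.
move=> hs; case: (pickP (fun k => 0 < h k)) => [k hk | H]; first by exists k.
exfalso; have : \sum_(k < m) h k <= 0 by apply: sumr_le0 => k _; rewrite leNgt H.
by move/(lt_le_trans hs); rewrite ltxx.
Qed.

Lemma lat_ge0 (R : realType) n m (a : 'I_n -> 'I_m -> R) b g i :
  (forall i, 0 <= b i) -> (forall i j, 0 < a i j) -> (forall i j, 0 <= g i j) ->
  0 <= latency a b g i.
Proof.
move=> hb ha hg; rewrite /latency addr_ge0 // sumr_ge0 // => j _.
by rewrite mulr_ge0 // ltW.
Qed.

Theorem theorem2 (R : realType) (n m : nat)
  (a : 'I_n -> 'I_m -> R) (b : 'I_n -> R) (d : 'I_m -> R)
  (fstar : 'I_n -> 'I_m -> R) (mu : R) :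
  (forall j, 0 <= d j) ->
  (forall i, 0 <= b i) ->
  (forall i j, 0 < a i j) ->
  feasible d fstar ->
  (forall g : 'I_n -> 'I_m -> R, feasible d g ->
     social_cost a b fstar <= social_cost a b g) ->
  acyclic_graph (support_graph fstar) ->
  exists P0 : R, forall P : R, P0 <= P ->
    forall f : 'I_n -> 'I_m -> R,
      equilibrium a b d (opt_tolls a b fstar mu P) f <->
      (forall i j, f i j = fstar i j).
Proof.
move=> hd hb ha [f0 fs] _ acyc.
pose B := \sum_(i < n) (b i + \sum_(j < m) a i j * d j).
have Bi : forall i, b i + \sum_(j < m) a i j * d j <= B.
  move=> i; rewrite /B (bigD1 i) //= lerDl sumr_ge0 // => k _.
  by rewrite addr_ge0 // sumr_ge0 // => j _; rewrite mulr_ge0 // ltW.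
have B0 : 0 <= B.
  rewrite /B sumr_ge0 // => k _.
  by rewrite addr_ge0 // sumr_ge0 // => j _; rewrite mulr_ge0 // ltW.
exists (mu + B + 1) => P hP f.
have ls0 : forall i, 0 <= latency a b fstar i by move=> i; apply: lat_ge0.
split.
- move=> [[fge fsum] eqf].
  have le_d : forall i j, f i j <= d j.
    by move=> i j; rewrite -fsum (bigD1 i) //= lerDl sumr_ge0.
  have lf0 : forall i, 0 <= latency a b f i by move=> i; apply: lat_ge0.
  have lat_le : forall i, latency a b f i <= B.
    move=> i; apply: le_trans (Bi i); rewrite /latency lerD2l.
    by apply: ler_sum => j _; rewrite ler_pM2l.
  have supp : forall i j, 0 < f i j -> 0 < fstar i j.
    move=> i j fij; rewrite ltNge; apply/negP => fs0.
    have [i' fi'] : exists i', 0 < fstar i' j.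
      by apply: exists_pos'; rewrite fs; apply: lt_le_trans fij (le_d i j).
    have := eqf j i fij i'; rewrite /cost /opt_tolls fi' ltNge fs0 /=.
    have := lat_le i'; have := lf0 i; have := ls0 i'; lra.
  pose g i j := f i j - fstar i j.
  pose del i := latency a b f i - latency a b fstar i.
  have delE : forall i, del i = \sum_(j < m) a i j * g i j.
    move=> i; rewrite /del /latency /g.
    have -> : \sum_(j < m) a i j * (f i j - fstar i j) =
              \sum_(j < m) a i j * f i j - \sum_(j < m) a i j * fstar i j.
      by rewrite -sumrB; apply: eq_bigr => j _; rewrite mulrBr.
    lra.
  have gsum : forall j, \sum_(i < n) g i j = 0.
    by move=> j; rewrite /g sumrB fs fsum subrr.
  have ineq : forall i i' j, 0 < f i j -> 0 < fstar i' j -> del i <= del i'.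
    move=> i i' j fij fi'; have := eqf j i fij i'.
    rewrite /cost /opt_tolls fi' supp // /del; lra.
  have gsupp : forall i j, g i j != 0 -> 0 < fstar i j.
    move=> i j; rewrite /g subr_eq0 => ne.
    case: (ltrP 0 (f i j)) => [/supp // | fle].
    have fz : f i j = 0 by apply/eqP; rewrite eq_le fle fge.
    by rewrite lt_neqAle f0 andbT; move: ne; rewrite fz eq_sym.
  have gpos : forall i j, 0 < g i j -> 0 < f i j.
    by move=> i j; rewrite /g subr_gt0; apply: le_lt_trans (f0 i j).
  have gneg : forall i j, g i j < 0 -> 0 < fstar i j.
    by move=> i j; rewrite /g subr_lt0; apply: le_lt_trans (fge i j).
  move=> i0 j0; apply/eqP; rewrite -subr_eq0; apply/negPn/negP => gne.
  pose S : rel ('I_n + 'I_m)%type := fun u v => match u, v with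
    | inl i, inr j => ((0 < g i j) && (0 <= del i)) || ((g i j < 0) && (del i < 0))
    | inr j, inl i => ((g i j < 0) && (0 <= del i)) || ((0 < g i j) && (del i < 0))
    | _, _ => false end.
  have irr : forall x, ~~ support_graph fstar x x by case.
  have Se : forall u v, S u v -> support_graph fstar u v.
    move=> [i|j] [i'|j'] //= /orP[] /andP[hg _]; apply: gsupp;
      by rewrite ?(gt_eqF hg) ?(lt_eqF hg).
  have Snext : forall u v, S u v -> exists w, (w != u) && S v w.
    move=> [i|j] [i'|j'] //= /orP[] /andP[hg hdl].
    + have s1 : \sum_(i < n) g i j' <= 0 by rewrite gsum.
      have [k hk] := exists_neg (h := fun k => g k j') hg s1.
      exists (inl k); apply/andP; split.
        by apply/negP => /eqP [ki]; move: hk; rewrite ki ltNge ltW.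
      rewrite /S hk /=; apply/orP; left.
      exact: le_trans hdl (ineq _ _ _ (gpos _ _ hg) (gneg _ _ hk)).
    + have s1 : 0 <= \sum_(i < n) g i j' by rewrite gsum.
      have [k hk] := exists_pos (h := fun k => g k j') hg s1.
      exists (inl k); apply/andP; split.
        by apply/negP => /eqP [ki]; move: hk; rewrite ki ltNge ltW.
      rewrite /S hk /=; apply/orP; right.
      exact: le_lt_trans (ineq _ _ _ (gpos _ _ hk) (gneg _ _ hg)) hdl.
    + have h1 : a i' j * g i' j < 0 by rewrite pmulr_rlt0.
      have s1 : 0 <= \sum_(k < m) a i' k * g i' k by rewrite -delE.
      have [k hk] := exists_pos (h := fun k => a i' k * g i' k) h1 s1.
      rewrite /= pmulr_rgt0 // in hk.
      exists (inr k); apply/andP; split.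
        by apply/negP => /eqP [kj]; move: hk; rewrite kj ltNge ltW.
      by rewrite /S hk hdl.
    + have h1 : 0 < a i' j * g i' j by rewrite pmulr_rgt0.
      have s1 : \sum_(k < m) a i' k * g i' k <= 0 by rewrite -delE ltW.
      have [k hk] := exists_neg (h := fun k => a i' k * g i' k) h1 s1.
      rewrite /= pmulr_rlt0 // in hk.
      exists (inr k); apply/andP; split.
        by apply/negP => /eqP [kj]; move: hk; rewrite kj ltNge ltW.
      by rewrite /S hk hdl orbT.
  have [u0 [v0 S0]] : exists u0 v0, S u0 v0.
    have gne' : g i0 j0 != 0 by [].
    case: (ltrP (del i0) 0) => hdl; case: (ltrP (g i0 j0) 0) => hg.
    - by exists (inl i0), (inr j0); rewrite /S hg hdl orbT.
    - have hg' : 0 < g i0 j0 by rewrite lt_neqAle eq_sym gne' hg.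
      by exists (inr j0), (inl i0); rewrite /S hg' hdl orbT.
    - by exists (inr j0), (inl i0); rewrite /S hg hdl.
    - have hg' : 0 < g i0 j0 by rewrite lt_neqAle eq_sym gne' hg.
      by exists (inl i0), (inr j0); rewrite /S hg' hdl.
  have [c [hc uc]] := walk_cycle irr Se Snext S0.
  exact: acyc c hc uc.
- move=> Hf.
  have lat : forall i, latency a b f i = latency a b fstar i.
    by move=> i; rewrite /latency; congr (_ + _); apply: eq_bigr => j _; rewrite Hf.
  split; first split.
  + by move=> i j; rewrite Hf.
  + by move=> j; rewrite -(fs j); apply: eq_bigr => i _; rewrite Hf.
  move=> j i fij i'; rewrite Hf in fij.
  rewrite /cost /opt_tolls fij !lat; case: ifP => _; first lra.
  have := ls0 i'; lra.
Qed.
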